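(* Let $B_0,\ldots,B_N$, $T$, $\mathcal{F}$, $e$ be as in the context, let $\boldsymbol\lambda=(\lambda_1,\ldots,\lambda_m)$ be a stable non-resonant vector of eigenvalues with all $\lambda_i\ne0$, and let $C$ be a constant with $\|T(\boldsymbol\lambda^\alpha)^{-1}\|\le C|\boldsymbol\lambda^\alpha|^{-e}$ for all $|\alpha|\ge2$ (operator norm with respect to $\|\cdot\|_\infty$). Suppose $0<\mu\le\min\{|\lambda_1|^e,\ldots,|\lambda_m|^e\}$. Define $K$ on $H$ by $K\varphi=\sum_{|\alpha|\ge2}z^\alpha T(\boldsymbol\lambda^\alpha)^{-1}\varphi_\alpha$ for $\varphi=\sum_{|\alpha|\ge2}z^\alpha\varphi_\alpha$. Then $K$ is a bounded linear operator $H\to H(\mu)$ which inverts $D\Phi(0)$ (i.e. $\sum_{i=0}^NB_i(K\varphi)(\Lambda^iz)=\varphi(z)$ for $\|z\|_\infty\le\mu$, with $\Lambda=\mathrm{diag}(\lambda_1,\ldots,\lambda_m)$), and the composition $\Delta_\mu K:H\to H$ is bounded with $\|\Delta_\mu K\|\le C$.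
   Context: $T(\lambda)=\sum_{i=0}^N\lambda^iB_i$, $\mathcal{F}(\lambda)=\det T(\lambda)=\lambda^eg(\lambda)$ with $g(0)\neq0$ ($e$ maximal). A vector $\boldsymbol\lambda\in\mathbb{C}^m$ is a stable non-resonant vector of eigenvalues if $|\lambda_i|<1$, $\mathcal{F}(\lambda_i)=0$, and $\mathcal{F}(\boldsymbol\lambda^\alpha)\ne0$ for all $|\alpha|\ge2$; $\boldsymbol\lambda^\alpha=\prod\lambda_i^{\alpha_i}$. Sup norm $\|\cdot\|_\infty$ on $\mathbb{C}^s$. For $\mu>0$, $H(\mu)$ is the Banach space of functions $P(z)=\sum_{k\ge2}\sum_{|\alpha|=k}z^\alpha P_\alpha$ on $\{z\in\mathbb{C}^m:\|z\|_\infty\le\mu\}$ with values in $\mathbb{C}^d$ and norm $\|P\|_\mu=\sum_{k\ge2}\sum_{|\alpha|=k}\mu^k\|P_\alpha\|_\infty<\infty$; $H=H(1)$ with norm $\|\cdot\|_1$. $\Delta_\mu:H(\mu)\to H$ is $\Delta_\mu[\varphi](z)=\varphi(\mu z)$. $D\Phi(0)$ is the linear operator $\varphi\mapsto\sum_{i=0}^NB_i\,\varphi\circ\Lambda^i$. *)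

(* Defs.v *)
From Stdlib Require Import Reals Lra List Arith.
Import ListNotations.
Open Scope R_scope.

Record Cx := mkC { re : R; im : R }.
Definition C0 : Cx := mkC 0 0.
Definition C1 : Cx := mkC 1 0.
Definition Cadd (a b : Cx) : Cx := mkC (re a + re b) (im a + im b).
Definition Copp (a : Cx) : Cx := mkC (- re a) (- im a).
Definition Cmul (a b : Cx) : Cx :=
  mkC (re a * re b - im a * im b) (re a * im b + im a * re b).
Definition Cnorm (a : Cx) : R := sqrt (re a ^ 2 + im a ^ 2).
Fixpoint Cpow (a : Cx) (n : nat) : Cx :=
  match n with O => C1 | S n' => Cmul a (Cpow a n') end.
Definition Clsum (l : list Cx) : Cx := fold_right Cadd C0 l.
Definition Csum (n : nat) (f : nat -> Cx) : Cx := Clsum (map f (seq 0 n)).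
Definition Cinfinite_sum (s : nat -> Cx) (l : Cx) : Prop :=
  infinite_sum (fun k => re (s k)) (re l) /\ infinite_sum (fun k => im (s k)) (im l).
(* evaluation of the polynomial with coefficients g (lowest degree first) *)
Fixpoint peval (g : list Cx) (x : Cx) : Cx :=
  match g with nil => C0 | c :: g' => Cadd c (Cmul x (peval g' x)) end.

(* ---------- vectors in C^d and d x d matrices (entries with index < d) ---------- *)
Definition vec := nat -> Cx.
Definition mat := nat -> nat -> Cx.
Definition vnorm (d : nat) (v : vec) : R :=
  fold_right Rmax 0 (map (fun i => Cnorm (v i)) (seq 0 d)).
Definition mv (d : nat) (M : mat) (v : vec) : vec := fun i => Csum d (fun j => Cmul (M i j) (v j)).
Definition mm (d : nat) (M N : mat) : mat := fun i k => Csum d (fun j => Cmul (M i j) (N j k)).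
Definition idm : mat := fun i j => if Nat.eqb i j then C1 else C0.
Definition mat_eq (d : nat) (M N : mat) : Prop := forall i j, (i < d)%nat -> (j < d)%nat -> M i j = N i j.
Definition opnorm_le (d : nat) (M : mat) (c : R) : Prop :=
  forall v : vec, vnorm d (mv d M v) <= c * vnorm d v.
Definition minor0 (A : mat) (j : nat) : mat :=
  fun i k => A (S i) (if Nat.ltb k j then k else S k).
Fixpoint det (n : nat) (A : mat) : Cx :=
  match n with
  | O => C1
  | S n' => Csum n (fun j => Cmul (Cpow (Copp C1) j) (Cmul (A O j) (det n' (minor0 A j))))
  end.

Definition Tmat (N : nat) (B : nat -> mat) (l : Cx) : mat :=
  fun i j => Csum (S N) (fun k => Cmul (Cpow l k) (B k i j)).

(* all alpha in N^m (as lists of length m) with |alpha| = k *)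
Fixpoint mindices (m k : nat) : list (list nat) :=
  match m with
  | O => if Nat.eqb k 0 then [nil] else nil
  | S m' => flat_map (fun j => map (cons j) (mindices m' (k - j))) (seq 0 (S k))
  end.
Definition msize (al : list nat) : nat := fold_right Nat.add O al.
Definition mpow (x : list Cx) (al : list nat) : Cx :=
  fold_right Cmul C1 (map (fun p => Cpow (fst p) (snd p)) (combine x al)).

(* An element P of H(mu) is given by its coefficients P_alpha in C^d, alpha in N^m,
   |alpha| >= 2 (other coefficients are ignored). *)
Definition coeffs := list nat -> vec.
Definition normterm (d m : nat) (mu : R) (P : coeffs) (k : nat) : R :=
  if Nat.leb 2 k then
    mu ^ k * fold_right Rplus 0 (map (fun al => vnorm d (P al)) (mindices m k))
  else 0.
Definition Hnorm_is (d m : nat) (mu : R) (P : coeffs) (l : R) : Prop :=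
  infinite_sum (normterm d m mu P) l.
Definition inH (d m : nat) (mu : R) (P : coeffs) : Prop := exists l, Hnorm_is d m mu P l.
Definition Heval (d m : nat) (P : coeffs) (z : list Cx) (v : vec) : Prop :=
  forall i, (i < d)%nat ->
    Cinfinite_sum
      (fun k => if Nat.leb 2 k then
                  Clsum (map (fun al => Cmul (mpow z al) (P al i)) (mindices m k))
                else C0) (v i).
(* Delta_mu : (Delta_mu P)(z) = P(mu z), i.e. coefficients multiplied by mu^|alpha| *)
Definition DeltaMu (mu : R) (P : coeffs) : coeffs :=
  fun al i => Cmul (mkC (mu ^ msize al) 0) (P al i).
Definition Lampow (lam : list Cx) (i : nat) (z : list Cx) : list Cx :=
  map (fun p => Cmul (Cpow (fst p) i) (snd p)) (combine lam z).
(* the operator K, given the inverses Tinv x = T(x)^{-1} *)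
Definition Kop (d : nat) (lam : list Cx) (Tinv : Cx -> mat) (phi : coeffs) : coeffs :=
  fun al => if Nat.leb 2 (msize al) then mv d (Tinv (mpow lam al)) (phi al) else (fun _ => C0).

(* Main.v *)
Require Import Defs.
From Stdlib Require Import Reals List.
From Stdlib Require Import Lra Lia Psatz Arith Ring IndefiniteDescription.
Import ListNotations.
Open Scope R_scope.

Lemma Cext (a b : Cx) : re a = re b -> im a = im b -> a = b.
Proof. destruct a, b; simpl; intros; subst; reflexivity. Qed.

Definition Csub (a b : Cx) := Cadd a (Copp b).

Lemma Cring : ring_theory C0 Defs.C1 Cadd Cmul Csub Copp (@eq Cx).
Proof.
  constructor; intros; apply Cext; unfold Csub, Cadd, Cmul, Copp, C0, Defs.C1; simpl; ring.
Qed.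
Add Ring Cxring : Cring.


Lemma Un_cv_ext (u v : nat -> R) l : (forall n, u n = v n) -> Un_cv u l -> Un_cv v l.
Proof. intros H Hu eps Heps. destruct (Hu eps Heps) as [N HN]. exists N; intros n Hn. rewrite <- H. auto. Qed.

Lemma Un_cv_const x : Un_cv (fun _ => x) x.
Proof. intros eps Heps. exists O. intros n _. unfold Rdist. rewrite Rminus_diag, Rabs_R0. lra. Qed.

Lemma inf_Un (s : nat -> R) l : infinite_sum s l <-> Un_cv (fun n => sum_f_R0 s n) l.
Proof. split; intro H; exact H. Qed.

Lemma inf_ext (f g : nat -> R) l : (forall k, f k = g k) -> infinite_sum f l -> infinite_sum g l.
Proof.
  intros H Hf. apply inf_Un. apply Un_cv_ext with (fun n => sum_f_R0 f n).
  - intro n. apply sum_eq. auto.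
  - exact Hf.
Qed.

Lemma inf_lin (f g : nat -> R) a b x y : infinite_sum f a -> infinite_sum g b ->
  infinite_sum (fun k => x * f k + y * g k) (x * a + y * b).
Proof.
  intros Hf Hg. apply inf_Un.
  apply Un_cv_ext with (fun n => x * sum_f_R0 f n + y * sum_f_R0 g n).
  - intro n. rewrite plus_sum, !scal_sum. f_equal; apply sum_eq; intros; ring.
  - apply CV_plus; apply CV_mult; try apply Un_cv_const; assumption.
Qed.

Lemma inf_zero : infinite_sum (fun _ => 0) 0.
Proof.
  apply inf_Un. apply Un_cv_ext with (fun _ => 0).
  - intro n. induction n; simpl; [reflexivity| rewrite <- IHn; ring].
  - apply Un_cv_const.
Qed.

Lemma inf_dom (a b : nat -> R) lb : (forall k, Rabs (a k) <= b k) -> infinite_sum b lb ->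
  exists l, infinite_sum a l.
Proof.
  intros H Hb.
  assert (X : {l | Un_cv (fun N => sum_f_R0 (fun i => Rabs (a i)) N) l}).
  { apply Rseries_CV_comp with b. intro n; split; [apply Rabs_pos | apply H].
    exists lb; exact Hb. }
  apply cv_cauchy_1, cauchy_abs, cv_cauchy_2 in X. destruct X as [l Hl]. exists l; exact Hl.
Qed.

Lemma inf_le (a b : nat -> R) la lb : (forall k, a k <= b k) -> infinite_sum a la ->
  infinite_sum b lb -> la <= lb.
Proof.
  intros H Ha Hb. eapply Rle_cv_lim; [|exact Ha|exact Hb].
  intro n. apply sum_Rle. auto.
Qed.

Lemma Cinf_ext (s t : nat -> Cx) l : (forall k, s k = t k) -> Cinfinite_sum s l -> Cinfinite_sum t l.
Proof. intros H [H1 H2]. split; eapply inf_ext; eauto; intro k; simpl; rewrite H; reflexivity. Qed.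

Lemma Cinf_add (s t : nat -> Cx) a b : Cinfinite_sum s a -> Cinfinite_sum t b ->
  Cinfinite_sum (fun k => Cadd (s k) (t k)) (Cadd a b).
Proof.
  intros [H1 H2] [H3 H4]. split.
  - replace (re (Cadd a b)) with (1 * re a + 1 * re b) by (simpl; ring).
    eapply inf_ext; [|apply inf_lin; eauto]. intro k; simpl; ring.
  - replace (im (Cadd a b)) with (1 * im a + 1 * im b) by (simpl; ring).
    eapply inf_ext; [|apply inf_lin; eauto]. intro k; simpl; ring.
Qed.

Lemma Cinf_scale (s : nat -> Cx) a c : Cinfinite_sum s a ->
  Cinfinite_sum (fun k => Cmul c (s k)) (Cmul c a).
Proof.
  intros [H1 H2]. split.
  - replace (re (Cmul c a)) with (re c * re a + (- im c) * im a) by (simpl; ring).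
    eapply inf_ext; [|apply inf_lin; eauto]. intro k; simpl; ring.
  - replace (im (Cmul c a)) with (im c * re a + re c * im a) by (simpl; ring).
    eapply inf_ext; [|apply (inf_lin _ _ _ _ (im c) (re c) H1 H2)]. intro k; simpl; ring.
Qed.

Lemma Cinf_zero : Cinfinite_sum (fun _ => C0) C0.
Proof. split; simpl; apply inf_zero. Qed.

Lemma Cinf_uniq s a b : Cinfinite_sum s a -> Cinfinite_sum s b -> a = b.
Proof.
  intros [H1 H2] [H3 H4]. apply Cext; eapply uniqueness_sum; eauto.
Qed.

Lemma Cinf_lsum {A} (l : list A) (s : A -> nat -> Cx) (L : A -> Cx) :
  (forall x, In x l -> Cinfinite_sum (s x) (L x)) ->
  Cinfinite_sum (fun k => Clsum (map (fun x => s x k) l)) (Clsum (map L l)).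
Proof.
  induction l as [|x l IH]; intro H; simpl.
  - apply Cinf_zero.
  - apply Cinf_add; [apply H; simpl; auto | apply IH; intros; apply H; simpl; auto].
Qed.

Lemma Clsum_ext {A} (l : list A) f g : (forall x, In x l -> f x = g x) ->
  Clsum (map f l) = Clsum (map g l).
Proof.
  induction l as [|x l IH]; intro H; simpl; [reflexivity|].
  rewrite H, IH; auto. intros; apply H; simpl; auto. simpl; auto.
Qed.

Lemma Clsum_add {A} (l : list A) f g :
  Clsum (map (fun x => Cadd (f x) (g x)) l) = Cadd (Clsum (map f l)) (Clsum (map g l)).
Proof. induction l as [|x l IH]; simpl; [ring|]. rewrite IH; ring. Qed.

Lemma Clsum_scal {A} (l : list A) f c :
  Clsum (map (fun x => Cmul c (f x)) l) = Cmul c (Clsum (map f l)).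
Proof. induction l as [|x l IH]; simpl; [ring|]. rewrite IH; ring. Qed.

Lemma Clsum_zero {A} (l : list A) : Clsum (map (fun _ => C0) l) = C0.
Proof. induction l as [|x l IH]; simpl; [reflexivity|]. rewrite IH; ring. Qed.

Lemma Clsum_exch {A B} (l1 : list A) (l2 : list B) f :
  Clsum (map (fun x => Clsum (map (fun y => f x y) l2)) l1)
  = Clsum (map (fun y => Clsum (map (fun x => f x y) l1)) l2).
Proof.
  induction l1 as [|x l1 IH]; simpl.
  - symmetry; apply Clsum_zero.
  - rewrite IH, <- Clsum_add. reflexivity.
Qed.

Lemma Cnorm_pos a : 0 <= Cnorm a.
Proof. apply sqrt_pos. Qed.

Lemma Cnorm_mul a b : Cnorm (Cmul a b) = Cnorm a * Cnorm b.
Proof.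
  unfold Cnorm. rewrite <- sqrt_mult by nra. f_equal. simpl; ring.
Qed.

Lemma re_le a : Rabs (re a) <= Cnorm a.
Proof. unfold Cnorm. rewrite <- sqrt_Rsqr_abs. apply sqrt_le_1_alt. unfold Rsqr. nra. Qed.

Lemma im_le a : Rabs (im a) <= Cnorm a.
Proof. unfold Cnorm. rewrite <- sqrt_Rsqr_abs. apply sqrt_le_1_alt. unfold Rsqr. nra. Qed.

Lemma Cnorm_real r : 0 <= r -> Cnorm (mkC r 0) = r.
Proof. intro. unfold Cnorm. simpl re; simpl im. replace (r ^ 2 + 0 ^ 2) with (r ^ 2) by ring. apply sqrt_pow2; auto. Qed.

Lemma Cnorm_C1 : Cnorm Defs.C1 = 1.
Proof. apply Cnorm_real; lra. Qed.

Lemma Cnorm_pow a n : Cnorm (Cpow a n) = Cnorm a ^ n.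
Proof. induction n; simpl. apply Cnorm_C1. rewrite Cnorm_mul, IHn; ring. Qed.

Lemma pow_le1 x n : 0 <= x -> x <= 1 -> x ^ n <= 1.
Proof. intros. induction n; simpl; [lra|]. nra. Qed.

Lemma pow_le_mono x y n : 0 <= x -> x <= y -> x ^ n <= y ^ n.
Proof. intros. apply pow_incr; auto. Qed.

Definition rsum (l : list R) : R := fold_right Rplus 0 l.

Lemma rsum_pos {A} (l : list A) f : (forall x, In x l -> 0 <= f x) -> 0 <= rsum (map f l).
Proof.
  induction l as [|x l IH]; intro H; simpl; [lra|].
  assert (0 <= f x) by (apply H; simpl; auto).
  assert (0 <= rsum (map f l)) by (apply IH; intros; apply H; simpl; auto). unfold rsum in *; lra.
Qed.

Lemma rsum_le {A} (l : list A) f g : (forall x, In x l -> f x <= g x) -> rsum (map f l) <= rsum (map g l).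
Proof.
  induction l as [|x l IH]; intro H; simpl; [lra|].
  assert (f x <= g x) by (apply H; simpl; auto).
  assert (rsum (map f l) <= rsum (map g l)) by (apply IH; intros; apply H; simpl; auto). unfold rsum in *; lra.
Qed.

Lemma rsum_scal {A} (l : list A) f c : rsum (map (fun x => c * f x) l) = c * rsum (map f l).
Proof. induction l as [|x l IH]; simpl; [ring|]. unfold rsum in *; rewrite IH; ring. Qed.

Lemma rsum_ext {A} (l : list A) f g : (forall x, In x l -> f x = g x) -> rsum (map f l) = rsum (map g l).
Proof.
  induction l as [|x l IH]; intro H; simpl; [reflexivity|].
  unfold rsum in *. rewrite H, IH; auto. intros; apply H; simpl; auto. simpl; auto.
Qed.

Lemma re_Clsum_le {A} (l : list A) f : Rabs (re (Clsum (map f l))) <= rsum (map (fun x => Cnorm (f x)) l).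
Proof.
  induction l as [|x l IH]; simpl. rewrite Rabs_R0; lra.
  unfold rsum in *. eapply Rle_trans; [apply Rabs_triang|]. pose proof (re_le (f x)). lra.
Qed.

Lemma im_Clsum_le {A} (l : list A) f : Rabs (im (Clsum (map f l))) <= rsum (map (fun x => Cnorm (f x)) l).
Proof.
  induction l as [|x l IH]; simpl. rewrite Rabs_R0; lra.
  unfold rsum in *. eapply Rle_trans; [apply Rabs_triang|]. pose proof (im_le (f x)). lra.
Qed.

Lemma fmax_pos (l : list R) : 0 <= fold_right Rmax 0 l.
Proof. induction l; simpl; [lra|]. eapply Rle_trans; [exact IHl| apply Rmax_r]. Qed.

Lemma fmax_ge (l : list R) x : In x l -> x <= fold_right Rmax 0 l.
Proof.
  induction l; simpl; [tauto|]. intros [->|H]. apply Rmax_l.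
  eapply Rle_trans; [apply IHl; auto| apply Rmax_r].
Qed.

Lemma fmax_scal (l : list R) r : 0 <= r -> fold_right Rmax 0 (map (fun x => r * x) l) = r * fold_right Rmax 0 l.
Proof.
  intro Hr. induction l; simpl. ring. rewrite IHl, RmaxRmult; auto.
Qed.

Lemma vnorm_pos d v : 0 <= vnorm d v.
Proof. apply fmax_pos. Qed.

Lemma vnorm_ge d v i : (i < d)%nat -> Cnorm (v i) <= vnorm d v.
Proof.
  intro. apply fmax_ge. apply (in_map (fun j => Cnorm (v j))). apply in_seq. lia.
Qed.

Lemma vnorm_scal d v r : 0 <= r -> vnorm d (fun i => Cmul (mkC r 0) (v i)) = r * vnorm d v.
Proof.
  intro Hr. unfold vnorm. rewrite <- fmax_scal by auto. rewrite map_map. f_equal.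
  apply map_ext. intro i. rewrite Cnorm_mul, Cnorm_real; auto.
Qed.

Lemma mind_prop m : forall k al, In al (mindices m k) -> length al = m /\ msize al = k.
Proof.
  induction m as [|m IH]; intros k al H.
  - simpl in H. destruct (Nat.eqb_spec k 0); simpl in H; [|tauto]. destruct H as [<-|[]]. simpl; auto.
  - change (In al (flat_map (fun j => map (cons j) (mindices m (k - j))) (seq 0 (S k)))) in H.
    apply in_flat_map in H. destruct H as [j [Hj H]]. apply in_map_iff in H.
    destruct H as [al' [<- H]]. apply IH in H. apply in_seq in Hj. simpl. split; [lia|].
    unfold msize in *; simpl; lia.
Qed.

Lemma Cpow_add a n p : Cpow a (n + p) = Cmul (Cpow a n) (Cpow a p).
Proof. induction n; simpl; [ring|]. rewrite IHn; ring. Qed.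

Lemma Cpow_mul a b n : Cpow (Cmul a b) n = Cmul (Cpow a n) (Cpow b n).
Proof. induction n; simpl; [ring|]. rewrite IHn; ring. Qed.

Lemma Cpow_pow a n p : Cpow (Cpow a n) p = Cpow a (n * p).
Proof.
  induction p; simpl. rewrite Nat.mul_0_r; reflexivity.
  rewrite IHp, <- Cpow_add. f_equal. lia.
Qed.

Lemma mpow_norm_le al : forall z r, length z = length al -> 0 <= r ->
  Forall (fun zi => Cnorm zi <= r) z -> Cnorm (mpow z al) <= r ^ msize al.
Proof.
  induction al as [|n al IH]; intros z r Hl Hr Hz.
  - unfold mpow. destruct z; simpl; rewrite Cnorm_C1; lra.
  - destruct z as [|a z]; simpl in Hl; [discriminate|]. inversion Hz; subst.
    unfold mpow; simpl. fold (mpow z al). unfold msize; simpl; fold (msize al).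
    rewrite Cnorm_mul, Cnorm_pow, pow_add. apply Rmult_le_compat.
    + apply pow_le, Cnorm_pos.
    + apply Cnorm_pos.
    + apply pow_le_mono; auto. apply Cnorm_pos.
    + apply IH; auto.
Qed.

Lemma mpow_norm_ge (mu : R) (e : nat) al : forall lam, length lam = length al -> 0 <= mu ->
  Forall (fun l => mu <= Cnorm l ^ e) lam -> mu ^ msize al <= Cnorm (mpow lam al) ^ e.
Proof.
  induction al as [|n al IH]; intros z Hl Hr Hz.
  - unfold mpow. destruct z; simpl; rewrite Cnorm_C1, pow1; lra.
  - destruct z as [|a z]; simpl in Hl; [discriminate|]. inversion Hz; subst.
    unfold mpow; simpl. fold (mpow z al). unfold msize; simpl; fold (msize al).
    rewrite Cnorm_mul, Cnorm_pow, pow_add, Rpow_mult_distr, <- pow_mult, Nat.mul_comm, pow_mult.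
    apply Rmult_le_compat.
    + apply pow_le; auto.
    + apply pow_le; auto.
    + apply pow_le_mono; auto.
    + apply IH; auto.
Qed.

Lemma mpow_Lampow al : forall lam z i, length lam = length al -> length z = length al ->
  mpow (Lampow lam i z) al = Cmul (Cpow (mpow lam al) i) (mpow z al).
Proof.
  induction al as [|n al IH]; intros lam z i Hl Hz.
  - destruct lam, z; simpl in *; try discriminate. unfold mpow, Lampow; simpl.
    idtac.
    induction i; simpl; [ring|]. simpl in IHi. transitivity (Cmul (Cpow Defs.C1 i) Defs.C1); [exact IHi| ring].
  - destruct lam as [|a lam]; simpl in Hl; [discriminate|].
    destruct z as [|b z]; simpl in Hz; [discriminate|].
    unfold mpow, Lampow; simpl. fold (mpow lam al). fold (mpow z al).
    fold (Lampow lam i z). fold (mpow (Lampow lam i z) al).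
    rewrite IH by lia. rewrite !Cpow_mul, !Cpow_pow, Nat.mul_comm. ring.
Qed.

Lemma Lampow_len lam z i : length (Lampow lam i z) = Nat.min (length lam) (length z).
Proof. unfold Lampow. rewrite length_map, length_combine. reflexivity. Qed.

Lemma Lampow_bound lam : forall z i mu, Forall (fun l => Cnorm l < 1) lam ->
  Forall (fun zi => Cnorm zi <= mu) z -> Forall (fun x => Cnorm x <= mu) (Lampow lam i z).
Proof.
  induction lam as [|a lam IH]; intros z i mu Hl Hz; [constructor|].
  destruct z as [|b z]; [constructor|]. inversion Hl; inversion Hz; subst.
  unfold Lampow; simpl. constructor.
  - rewrite Cnorm_mul, Cnorm_pow. pose proof (Cnorm_pos a). pose proof (Cnorm_pos b).
    assert (Cnorm a ^ i <= 1) by (apply pow_le1; lra). nra.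
  - apply IH; auto.
Qed.

Lemma Clsum_scal_r {A} (l : list A) f c :
  Clsum (map (fun x => Cmul (f x) c) l) = Cmul (Clsum (map f l)) c.
Proof. rewrite (Clsum_ext l _ (fun x => Cmul c (f x))) by (intros; ring). rewrite Clsum_scal; ring. Qed.

Lemma mv_mm d M N v j : mv d M (mv d N v) j = mv d (mm d M N) v j.
Proof.
  unfold mv, mm, Csum.
  transitivity (Clsum (map (fun j' => Clsum (map (fun j'' => Cmul (M j j') (Cmul (N j' j'') (v j''))) (seq 0 d))) (seq 0 d))).
  - apply Clsum_ext; intros; rewrite Clsum_scal; reflexivity.
  - rewrite Clsum_exch. apply Clsum_ext; intros j'' _.
    rewrite <- Clsum_scal_r. apply Clsum_ext; intros; ring.
Qed.

Lemma idm_sum (v : vec) j n s :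
  Clsum (map (fun j'' => Cmul (idm j j'') (v j'')) (seq s n)) =
  if (Nat.leb s j && Nat.ltb j (s + n))%bool then v j else C0.
Proof.
  revert s; induction n; intro s; simpl.
  - destruct (Nat.leb_spec s j), (Nat.ltb_spec j (s + 0)); simpl; auto; lia.
  - rewrite IHn. unfold idm. destruct (Nat.eqb_spec j s).
    + subst. destruct (Nat.leb_spec (S s) s); [lia|]. simpl.
      destruct (Nat.leb_spec s s), (Nat.ltb_spec s (s + S n)); try lia; simpl; ring.
    + destruct (Nat.leb_spec (S s) j), (Nat.ltb_spec j (S s + n)), (Nat.leb_spec s j), (Nat.ltb_spec j (s + S n)); try lia; simpl; ring.
Qed.

Lemma mv_idm d v j : (j < d)%nat -> mv d idm v j = v j.
Proof.
  intro H. unfold mv, Csum. rewrite idm_sum. destruct (Nat.leb_spec 0 j), (Nat.ltb_spec j (0 + d)); try lia; reflexivity.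
Qed.

Lemma mv_ext_mat d M M' v j : mat_eq d M M' -> (j < d)%nat -> mv d M v j = mv d M' v j.
Proof.
  intros H Hj. unfold mv, Csum. apply Clsum_ext. intros x Hx. apply in_seq in Hx. rewrite H; auto; lia.
Qed.

Definition termP (m : nat) (P : coeffs) (z : list Cx) (k : nat) (i : nat) : Cx :=
  if Nat.leb 2 k then Clsum (map (fun al => Cmul (mpow z al) (P al i)) (mindices m k)) else C0.

Lemma key_k d m N (B : nat -> mat) lam Tinv (phi : coeffs) z k j :
  length lam = m -> length z = m -> (j < d)%nat ->
  ((2 <= k)%nat -> forall al, In al (mindices m k) ->
     mat_eq d (mm d (Tmat N B (mpow lam al)) (Tinv (mpow lam al))) idm) ->
  Csum (S N) (fun i => mv d (B i) (fun j' => termP m (Kop d lam Tinv phi) (Lampow lam i z) k j') j)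
  = termP m phi z k j.
Proof.
  intros Hl Hz Hj H. unfold termP. destruct (Nat.leb 2 k) eqn:Ek.
  2:{ unfold Csum, mv. transitivity (Clsum (map (fun _ => C0) (seq 0 (S N)))); [|apply Clsum_zero].
      apply Clsum_ext; intros.
      transitivity (Clsum (map (fun _ => C0) (seq 0 d))); [|apply Clsum_zero].
      apply Clsum_ext; intros. ring. }
  set (Li := seq 0 (S N)). set (Ld := seq 0 d). set (Ls := mindices m k).
  set (F := fun i j' al => Cmul (mpow z al) (Cmul (Cpow (mpow lam al) i)
              (Cmul (B i j j') (mv d (Tinv (mpow lam al)) (phi al) j')))).
  transitivity (Clsum (map (fun i => Clsum (map (fun j' => Clsum (map (fun al => F i j' al) Ls)) Ld)) Li)).
  { unfold Csum, mv at 1. fold Li. apply Clsum_ext; intros i _. unfold Csum. fold Ld.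
    apply Clsum_ext; intros j' _. rewrite <- Clsum_scal. apply Clsum_ext; intros al Hal.
    destruct (mind_prop _ _ _ Hal) as [Hla Hsa]. unfold F, Kop.
    rewrite mpow_Lampow by lia.
    assert (E : Nat.leb 2 (msize al) = true) by (rewrite Hsa; exact Ek). rewrite E. ring. }
  transitivity (Clsum (map (fun al => Clsum (map (fun j' => Clsum (map (fun i => F i j' al) Li)) Ld)) Ls)).
  { transitivity (Clsum (map (fun i => Clsum (map (fun al => Clsum (map (fun j' => F i j' al) Ld)) Ls)) Li)).
    { apply Clsum_ext; intros. apply Clsum_exch. }
    rewrite Clsum_exch. apply Clsum_ext; intros. apply Clsum_exch. }
  apply Clsum_ext; intros al Hal.
  rewrite <- (mv_idm d (phi al) j Hj), <- (mv_ext_mat d _ _ _ _ (H (proj1 (Nat.leb_le 2 k) Ek) al Hal) Hj), <- mv_mm.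
  unfold mv at 1, Csum at 1. fold Ld. rewrite <- Clsum_scal. apply Clsum_ext; intros j' _.
  unfold Tmat, Csum. fold Li.
  rewrite <- Clsum_scal_r, <- Clsum_scal. apply Clsum_ext; intros i _. unfold F. ring.
Qed.

Lemma normterm_pos d m r P k : 0 <= r -> 0 <= normterm d m r P k.
Proof.
  intro. unfold normterm. destruct (Nat.leb 2 k); [|lra].
  apply Rmult_le_pos. apply pow_le; auto. apply (rsum_pos _ (fun al => vnorm d (P al))). intros; apply vnorm_pos.
Qed.

Lemma termP_conv d m (P : coeffs) z r l i : (i < d)%nat -> 0 <= r -> Hnorm_is d m r P l ->
  (forall k al, (2 <= k)%nat -> In al (mindices m k) -> Cnorm (mpow z al) <= r ^ k) ->
  exists v, Cinfinite_sum (fun k => termP m P z k i) v.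
Proof.
  intros Hi Hr Hl Hz.
  assert (Hb : forall k, Rabs (re (termP m P z k i)) <= normterm d m r P k /\
                         Rabs (im (termP m P z k i)) <= normterm d m r P k).
  { intro k. unfold termP, normterm. destruct (Nat.leb 2 k) eqn:Ek.
    2:{ simpl. rewrite Rabs_R0. lra. }
    apply Nat.leb_le in Ek.
    assert (rsum (map (fun al => Cnorm (Cmul (mpow z al) (P al i))) (mindices m k))
            <= r ^ k * fold_right Rplus 0 (map (fun al => vnorm d (P al)) (mindices m k))).
    { change (fold_right Rplus 0 (map (fun al => vnorm d (P al)) (mindices m k)))
        with (rsum (map (fun al => vnorm d (P al)) (mindices m k))).
      rewrite <- rsum_scal. apply rsum_le. intros al Hal. rewrite Cnorm_mul.
      apply Rmult_le_compat; try apply Cnorm_pos. apply Hz; auto. apply vnorm_ge; auto. }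
    pose proof (re_Clsum_le (mindices m k) (fun al => Cmul (mpow z al) (P al i))).
    pose proof (im_Clsum_le (mindices m k) (fun al => Cmul (mpow z al) (P al i))).
    split; lra. }
  destruct (inf_dom (fun k => re (termP m P z k i)) _ _ (fun k => proj1 (Hb k)) Hl) as [a Ha].
  destruct (inf_dom (fun k => im (termP m P z k i)) _ _ (fun k => proj2 (Hb k)) Hl) as [b Hb'].
  exists (mkC a b). split; assumption.
Qed.

Lemma per_al_bound (q X a b C : R) : 0 < q -> q <= X -> 0 <= a -> 0 <= b ->
  a <= C * / X * b -> q * a <= C * b.
Proof.
  intros Hq HqX Ha Hb H.
  assert (HX : 0 < X) by lra.
  set (y := / X) in *. assert (Hy : 0 < y) by (apply Rinv_0_lt_compat; auto).
  assert (Hqy : q * y <= 1).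
  { unfold y. apply (Rmult_le_reg_r X); auto. rewrite Rmult_assoc, Rinv_l by lra. lra. }
  destruct (Rle_dec 0 (C * b)).
  - assert (q * a <= q * (C * y * b)) by (apply Rmult_le_compat_l; lra).
    assert (q * (C * y * b) = (q * y) * (C * b)) by ring. nra.
  - assert (C * y * b = y * (C * b)) by ring. nra.
Qed.

Lemma nt_delta d m mu (P : coeffs) k : 0 <= mu ->
  normterm d m 1 (DeltaMu mu P) k = normterm d m mu P k.
Proof.
  intro Hmu. unfold normterm. destruct (Nat.leb 2 k); [|reflexivity].
  rewrite pow1, Rmult_1_l.
  change (rsum (map (fun al => vnorm d (DeltaMu mu P al)) (mindices m k)) =
          mu ^ k * rsum (map (fun al => vnorm d (P al)) (mindices m k))).
  rewrite <- rsum_scal. apply rsum_ext. intros al Hal.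
  destruct (mind_prop _ _ _ Hal) as [_ Hs]. unfold DeltaMu. rewrite vnorm_scal, Hs; auto.
  apply pow_le; auto.
Qed.

Lemma nt_bound d m lam Tinv e C mu (phi : coeffs) k :
  length lam = m -> 0 < mu -> Forall (fun l => mu <= Cnorm l ^ e) lam ->
  (forall k al, (2 <= k)%nat -> In al (mindices m k) ->
      opnorm_le d (Tinv (mpow lam al)) (C * / (Cnorm (mpow lam al) ^ e))) ->
  normterm d m mu (Kop d lam Tinv phi) k <= C * normterm d m 1 phi k.
Proof.
  intros Hl Hmu Hlam HC. unfold normterm. destruct (Nat.leb 2 k) eqn:Ek; [|lra].
  apply Nat.leb_le in Ek.
  change (mu ^ k * rsum (map (fun al => vnorm d (Kop d lam Tinv phi al)) (mindices m k)) <=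
          C * (1 ^ k * rsum (map (fun al => vnorm d (phi al)) (mindices m k)))).
  rewrite pow1, Rmult_1_l, <- !rsum_scal. apply rsum_le. intros al Hal.
  destruct (mind_prop _ _ _ Hal) as [Hla Hs].
  unfold Kop. rewrite Hs. destruct (Nat.leb_spec 2 k); [|lia].
  apply (per_al_bound _ (Cnorm (mpow lam al) ^ e)).
  - apply pow_lt; auto.
  - rewrite <- Hs. apply mpow_norm_ge; [lia|lra|auto].
  - apply vnorm_pos.
  - apply vnorm_pos.
  - apply (HC k al); auto.
Qed.
Theorem mainTheorem11
  (d m N : nat) (B : nat -> mat)
  (e : nat) (g : list Cx)
  (hg0 : peval g C0 <> C0)
  (hF : forall l : Cx, det d (Tmat N B l) = Cmul (Cpow l e) (peval g l))
  (lam : list Cx) (hlen : length lam = m)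
  (hstable : Forall (fun l => Cnorm l < 1 /\ det d (Tmat N B l) = C0 /\ l <> C0) lam)
  (hnonres : forall k al, (2 <= k)%nat -> In al (mindices m k) ->
               det d (Tmat N B (mpow lam al)) <> C0)
  (Tinv : Cx -> mat)
  (hTinv : forall k al, (2 <= k)%nat -> In al (mindices m k) ->
      mat_eq d (mm d (Tmat N B (mpow lam al)) (Tinv (mpow lam al))) idm /\
      mat_eq d (mm d (Tinv (mpow lam al)) (Tmat N B (mpow lam al))) idm)
  (C : R)
  (hC : forall k al, (2 <= k)%nat -> In al (mindices m k) ->
      opnorm_le d (Tinv (mpow lam al)) (C * / (Cnorm (mpow lam al) ^ e)))
  (mu : R) (hmu0 : 0 < mu) (hmu : Forall (fun l => mu <= Cnorm l ^ e) lam) :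
  let K := Kop d lam Tinv in
  (* K is linear *)
  (forall (a : Cx) (phi psi : coeffs) al i,
      K (fun be j => Cadd (phi be j) (Cmul a (psi be j))) al i
      = Cadd (K phi al i) (Cmul a (K psi al i))) /\
  (* K maps H into H(mu) and inverts DPhi(0) *)
  (forall phi : coeffs, inH d m 1 phi ->
      inH d m mu (K phi) /\
      forall z : list Cx, length z = m -> Forall (fun zi => Cnorm zi <= mu) z ->
        exists (w : nat -> vec) (v : vec),
          (forall i, (i <= N)%nat -> Heval d m (K phi) (Lampow lam i z) (w i)) /\
          Heval d m phi z v /\
          forall j, (j < d)%nat ->
            Csum (S N) (fun i => mv d (B i) (w i) j) = v j) /\
  (* K : H -> H(mu) is bounded *)
  (exists c : R, forall (phi : coeffs) (l : R), Hnorm_is d m 1 phi l ->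
      exists l', Hnorm_is d m mu (K phi) l' /\ l' <= c * l) /\
  (* Delta_mu K : H -> H is bounded with norm <= C *)
  (forall (phi : coeffs) (l : R), Hnorm_is d m 1 phi l ->
      exists l', Hnorm_is d m 1 (DeltaMu mu (K phi)) l' /\ l' <= C * l).
Proof.
  intros K.
  assert (Hstab1 : Forall (fun l => Cnorm l < 1) lam).
  { eapply Forall_impl; [|exact hstable]. simpl; tauto. }
  assert (HB : forall phi l, Hnorm_is d m 1 phi l ->
     exists l', Hnorm_is d m mu (K phi) l' /\ l' <= C * l).
  { intros phi l Hl.
    assert (Hnb := fun k => nt_bound d m lam Tinv e C mu phi k hlen hmu0 hmu hC).
    assert (Hs1 : infinite_sum (fun k => Rabs C * normterm d m 1 phi k + 0 * normterm d m 1 phi k)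
                               (Rabs C * l + 0 * l)) by (apply inf_lin; auto).
    assert (Hdom : forall k, Rabs (normterm d m mu (K phi) k) <=
               Rabs C * normterm d m 1 phi k + 0 * normterm d m 1 phi k).
    { intro k. rewrite Rabs_pos_eq by (apply normterm_pos; lra).
      pose proof (Hnb k) as Ha1. pose proof (normterm_pos d m 1 phi k ltac:(lra)) as Ha2.
      pose proof (Rmult_le_compat_r (normterm d m 1 phi k) _ _ Ha2 (Rle_abs C)) as Ha3.
      unfold K. lra. }
    destruct (inf_dom _ _ _ Hdom Hs1) as [l' Hl'].
    exists l'. split; auto.
    assert (Hs2 : infinite_sum (fun k => C * normterm d m 1 phi k + 0 * normterm d m 1 phi k)
                               (C * l + 0 * l)) by (apply inf_lin; auto).
    replace (C * l) with (C * l + 0 * l) by ring.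
    eapply inf_le; [|exact Hl'|exact Hs2]. intro k. pose proof (Hnb k). unfold K. lra. }
  split.
  {
    intros a phi psi al i. unfold K, Kop. destruct (Nat.leb 2 (msize al)).
    - unfold mv, Csum. rewrite <- Clsum_scal, <- Clsum_add. apply Clsum_ext; intros; ring.
    - apply Cext; simpl; ring. }
  split.
  { intros phi [l Hl]. destruct (HB phi l Hl) as [l1 [Hl1 _]]. split; [exists l1; auto|].
    intros z Hz Hzb.
    assert (Hzphi : forall k al, (2 <= k)%nat -> In al (mindices m k) -> Cnorm (mpow z al) <= 1 ^ k).
    { intros k al Hk Hal. destruct (mind_prop _ _ _ Hal) as [Hla Hs].
      destruct lam as [|a lam'].
      - simpl in hlen. subst m. destruct al; simpl in Hla; [|discriminate].
        unfold msize in Hs; simpl in Hs. lia.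
      - pose proof (Forall_inv hmu) as Ha1. pose proof (Forall_inv Hstab1) as Ha2. simpl in Ha1, Ha2.
        assert (Hmu1 : mu <= 1).
        { eapply Rle_trans; [exact Ha1|]. apply pow_le1; [apply Cnorm_pos|lra]. }
        rewrite <- Hs. eapply Rle_trans; [apply (mpow_norm_le _ z mu)|]; try lia; try lra; auto.
        apply pow_le_mono; lra. }
    assert (HzK : forall i k al, (2 <= k)%nat -> In al (mindices m k) ->
                    Cnorm (mpow (Lampow lam i z) al) <= mu ^ k).
    { intros i k al Hk Hal. destruct (mind_prop _ _ _ Hal) as [Hla Hs]. rewrite <- Hs.
      apply mpow_norm_le; [rewrite Lampow_len; lia|lra|]. apply Lampow_bound; auto. }
    assert (Hw : forall i j, exists x, (j < d)%nat ->
               Cinfinite_sum (fun k => termP m (K phi) (Lampow lam i z) k j) x).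
    { intros i j. destruct (lt_dec j d) as [Hj|Hj].
      - destruct (termP_conv d m (K phi) (Lampow lam i z) mu l1 j Hj ltac:(lra) Hl1 (HzK i)) as [x Hx].
        exists x; auto.
      - exists C0; intro; lia. }
    assert (Hv : forall j, exists x, (j < d)%nat ->
               Cinfinite_sum (fun k => termP m phi z k j) x).
    { intros j. destruct (lt_dec j d) as [Hj|Hj].
      - destruct (termP_conv d m phi z 1 l j Hj ltac:(lra) Hl Hzphi) as [x Hx].
        exists x; auto.
      - exists C0; intro; lia. }
    set (w := fun i j => proj1_sig (constructive_indefinite_description _ (Hw i j))).
    set (v := fun j => proj1_sig (constructive_indefinite_description _ (Hv j))).
    assert (Hwp : forall i j, (j < d)%nat ->
               Cinfinite_sum (fun k => termP m (K phi) (Lampow lam i z) k j) (w i j)).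
    { intros i j. unfold w. exact (proj2_sig (constructive_indefinite_description _ (Hw i j))). }
    assert (Hvp : forall j, (j < d)%nat -> Cinfinite_sum (fun k => termP m phi z k j) (v j)).
    { intros j. unfold v. exact (proj2_sig (constructive_indefinite_description _ (Hv j))). }
    exists w, v. split; [|split].
    - intros i _ j Hj. exact (Hwp i j Hj).
    - intros j Hj. exact (Hvp j Hj).
    - intros j Hj.
      assert (HL : Cinfinite_sum
        (fun k => Csum (S N) (fun i => mv d (B i) (fun j' => termP m (K phi) (Lampow lam i z) k j') j))
        (Csum (S N) (fun i => mv d (B i) (w i) j))).
      { unfold Csum at 2.
        eapply Cinf_ext; [|apply (Cinf_lsum (seq 0 (S N))
             (fun i k => mv d (B i) (fun j' => termP m (K phi) (Lampow lam i z) k j') j))].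
        { intro k. reflexivity. }
        intros i _. unfold mv at 2, Csum.
        eapply Cinf_ext; [|apply (Cinf_lsum (seq 0 d)
             (fun j' k => Cmul (B i j j') (termP m (K phi) (Lampow lam i z) k j')))].
        { intro k. reflexivity. }
        intros j' Hj'. apply in_seq in Hj'. apply Cinf_scale. apply Hwp. lia. }
      eapply Cinf_uniq; [exact HL|].
      eapply Cinf_ext; [|exact (Hvp j Hj)].
      intro k. symmetry. apply key_k; auto.
      intros Hk al Hal. exact (proj1 (hTinv k al Hk Hal)). }
  split.
  - exists C. exact HB.
  - intros phi l Hl. destruct (HB phi l Hl) as [l' [Hl' Hle]]. exists l'. split; auto.
    eapply inf_ext; [|exact Hl']. intro k. symmetry. apply nt_delta. lra.
Qed.
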